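(* There is no semi-planar function $f:\mathbb{Z}_6\to\mathbb{Z}_6$.
   Context: $\mathbb{Z}_6$ denotes the additive cyclic group of integers modulo $6$. A function $f:\mathbb{Z}_6\to\mathbb{Z}_6$ is semi-planar if for every non-zero $a\in\mathbb{Z}_6$ and every $y\in\mathbb{Z}_6$, the equation $f(x+a)-f(x)=y$ has either $0$ or $2$ solutions $x\in\mathbb{Z}_6$. *)

(* Defs.v *)
From mathcomp Require Import all_boot all_algebra.
Set Implicit Arguments. Unset Strict Implicit. Unset Printing Implicit Defensive.
Import GRing.Theory.
Local Open Scope ring_scope.

Definition semi_planar (f : 'Z_6 -> 'Z_6) : Prop :=
  forall a y : 'Z_6, a != 0 ->
    (#|[set x : 'Z_6 | (f (x + a)%R - f x)%R == y]| == 0)%N \/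
    (#|[set x : 'Z_6 | (f (x + a)%R - f x)%R == y]| == 2)%N.

(* Main.v *)
Require Import Defs.
From mathcomp Require Import all_boot all_algebra.
Import GRing.Theory.

Definition spn (g : nat -> nat) : bool :=
  all (fun a => all (fun y =>
     let c := count (fun x => (g ((x + a) %% 6) + (6 - g x)) %% 6 == y) (iota 0 6) in (c == 0) || (c == 2)) (iota 0 6)) (iota 1 5).
Definition mkn (g0 g1 g2 g3 g4 g5 : nat) (x : nat) : nat := nth 0 [:: g0; g1; g2; g3; g4; g5] x.
Lemma key : all (fun g1 => all (fun g2 => all (fun g3 => all (fun g4 => all (fun g5 =>
   ~~ spn (mkn 0 g1 g2 g3 g4 g5)) (iota 0 6)) (iota 0 6)) (iota 0 6)) (iota 0 6)) (iota 0 6).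
Proof. vm_compute. reflexivity. Qed.

Lemma spn_ext g g' : (forall n, n < 6 -> g n = g' n) -> spn g = spn g'.
Proof.
move=> E; rewrite /spn; apply: eq_in_all => a _; apply: eq_in_all => y _.
rewrite (@eq_in_count _ _ (fun x => (g' ((x + a) %% 6) + (6 - g' x)) %% 6 == y)) //.
by move=> x; rewrite mem_iota => /andP[_ hx]; rewrite !E // ltn_mod.
Qed.

Lemma link (h : 'Z_6 -> 'Z_6) : semi_planar h -> spn (fun n => val (h (inZp n))).
Proof.
move=> sp; apply/allP => a; rewrite mem_iota => /andP[a1 a6].
apply/allP => y; rewrite mem_iota => /andP[_ y6].
have A0 : (inZp a : 'Z_6) != 0%R.
  by apply/eqP => /(congr1 val) /=; rewrite modn_small //; case: a a1 a6.
have := sp (inZp a) (inZp y) A0.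
set S := [set x | _].
have -> : #|S| = count (fun x => (val (h (inZp ((x + a) %% 6))) + (6 - val (h (inZp x)))) %% 6 == y) (iota 0 6).
  rewrite cardE /enum_mem size_filter.
  have <- : map val (enum 'I_6) = iota 0 6 by rewrite val_enum_ord.
  rewrite count_map /S -enumT; apply: eq_count => x /=.
  rewrite inE.
  have E1 : inZp ((x + a) %% 6) = (x + inZp a)%R :> 'Z_6.
    by apply: val_inj => /=; change (Zp_trunc 6).+2 with 6; rewrite modn_mod modnDmr.
  rewrite E1 valZpK; set u := h _; set v := h x.
  by rewrite -(inj_eq val_inj) /=; change (Zp_trunc 6).+2 with 6; rewrite modnDmr (modn_small y6).
move=> H; cbv zeta; case: H => /eqP ->; by rewrite ?orbT.
Qed.

Theorem theorem5 : ~ (exists f : 'Z_6 -> 'Z_6, semi_planar f).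
Proof.
case=> f sp.
pose h x := (f x - f 0)%R.
have sph : semi_planar h.
  move=> a y a0; have := sp a y a0.
  have -> : [set x | (h (x + a) - h x)%R == y] = [set x | (f (x + a) - f x)%R == y].
    by apply/setP => x; rewrite !inE /h opprB addrA subrK.
  by [].
have S := @link h sph.
pose g n := val (h (inZp n)).
have g0 : g 0 = 0.
  by rewrite /g /h (_ : inZp 0 = 0%R :> 'Z_6) ?subrr //; apply: val_inj.
have gl n : g n \in iota 0 6 by rewrite mem_iota /= ltn_ord.
move/allP: key => /(_ _ (gl 1)) /allP /(_ _ (gl 2)) /allP /(_ _ (gl 3))
  /allP /(_ _ (gl 4)) /allP /(_ _ (gl 5)).
rewrite (@spn_ext _ g) ?S // => n.
by do 6?[case: n => [|n]] => //.
Qed.
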